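(* Let $g(x)=-\log|x|$ on $\mathbb{R}^2$. There exist bounded functions $Q_1,Q_2,Q_3\in C^0(\mathbb{R}^2\setminus\{0\})$ such that for every $\varphi\in C^\infty_c(\mathbb{R}^2;\mathbb{R}^2)$ there exist $G_{1,\varphi},G_{2,\varphi},G_{3,\varphi}\in C^0_0(\mathbb{R}^2\times\mathbb{R}^2)$ with $$\nabla g(x-y)\cdot(\varphi(x)-\varphi(y))=Q_1(x-y)G_{1,\varphi}(x,y)+Q_2(x-y)G_{2,\varphi}(x,y)+Q_3(x-y)G_{3,\varphi}(x,y)$$ for all $x\ne y$; the $Q_i$ do not depend on $\varphi$.
   Context: $C^0_0(\mathbb{R}^2\times\mathbb{R}^2)$ denotes continuous functions vanishing at infinity. *)

(* Defs.v *)
From Stdlib Require Import Reals List.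
From Coquelicot Require Import Coquelicot.
Open Scope R_scope.

Definition pt2 := (R * R)%type.

Definition sub2 (x y : pt2) : pt2 := (fst x - fst y, snd x - snd y).
Definition origin2 : pt2 := (0, 0).
Definition norm2 (x : pt2) : R := sqrt (fst x ^ 2 + snd x ^ 2).
Definition norm4 (p : pt2 * pt2) : R :=
  sqrt (fst (fst p) ^ 2 + snd (fst p) ^ 2 + fst (snd p) ^ 2 + snd (snd p) ^ 2).

Definition g (x : pt2) : R := - ln (norm2 x).

Definition pd (b : bool) (f : pt2 -> R) : pt2 -> R :=
  fun p => if b then Derive (fun t => f (t, snd p)) (fst p)
           else Derive (fun t => f (fst p, t)) (snd p).
Definition ex_pd (b : bool) (f : pt2 -> R) (p : pt2) : Prop :=
  if b then ex_derive (fun t => f (t, snd p)) (fst p)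
  else ex_derive (fun t => f (fst p, t)) (snd p).

Definition grad_g (z : pt2) : pt2 := (pd true g z, pd false g z).

Fixpoint iter_pd (ds : list bool) (f : pt2 -> R) : pt2 -> R :=
  match ds with
  | nil => f
  | d :: ds' => pd d (iter_pd ds' f)
  end.

Definition smooth2 (f : pt2 -> R) : Prop :=
  (forall ds p, continuous (iter_pd ds f) p) /\
  (forall ds d p, ex_pd d (iter_pd ds f) p).

Definition compact_support2 (f : pt2 -> R) : Prop :=
  exists M : R, forall p, norm2 p > M -> f p = 0.

Definition Cinf_c (phi : pt2 -> pt2) : Prop :=
  smooth2 (fun p => fst (phi p)) /\ smooth2 (fun p => snd (phi p)) /\
  compact_support2 (fun p => fst (phi p)) /\ compact_support2 (fun p => snd (phi p)).

(* bounded function in C^0(R^2 \ {0}) (values at 0 are irrelevant) *)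
Definition bdd_cont_punctured (Q : pt2 -> R) : Prop :=
  (forall z, z <> origin2 -> continuous Q z) /\
  (exists M : R, forall z, z <> origin2 -> Rabs (Q z) <= M).

Definition C00 (G : pt2 * pt2 -> R) : Prop :=
  (forall p, continuous G p) /\
  (forall eps : R, eps > 0 -> exists M : R,
      forall p, norm4 p > M -> Rabs (G p) < eps).

Definition dot2 (u v : pt2) : R := fst u * fst v + snd u * snd v.

(* Main.v *)
Require Import Defs.
From Stdlib Require Import Reals List Lra Psatz Classical ClassicalEpsilon.
From Coquelicot Require Import Coquelicot.
Open Scope R_scope.

Lemma ballR (x e y : R) : ball x e y <-> Rabs (y - x) < e.
Proof. unfold ball; simpl; unfold AbsRing_ball, abs, minus, plus, opp; simpl. tauto. Qed.

Lemma ballP {U V : UniformSpace} (x y : U * V) e :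
  ball x e y <-> ball (fst x) e (fst y) /\ ball (snd x) e (snd y).
Proof. split; intro H; exact H. Qed.

Section C.
Context {T : UniformSpace}.
Lemma cR_plus (f g : T -> R) x : continuous f x -> continuous g x ->
  continuous (fun y => f y + g y) x.
Proof. intros; exact (continuous_plus f g x H H0). Qed.
Lemma cR_mult (f g : T -> R) x : continuous f x -> continuous g x ->
  continuous (fun y => f y * g y) x.
Proof. intros; exact (continuous_mult f g x H H0). Qed.
Lemma cR_opp (f : T -> R) x : continuous f x -> continuous (fun y => - f y) x.
Proof. intros; exact (continuous_opp f x H). Qed.
Lemma cR_minus (f g : T -> R) x : continuous f x -> continuous g x ->
  continuous (fun y => f y - g y) x.
Proof. intros; apply cR_plus; auto; apply cR_opp; auto. Qed.
Lemma cR_const (c : R) x : continuous (fun _ : T => c) x.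
Proof. apply continuous_const. Qed.
Lemma cR_inv (f : T -> R) x : continuous f x -> f x <> 0 ->
  continuous (fun y => / f y) x.
Proof. intros. apply (continuous_comp f Rinv). auto. apply continuous_Rinv; auto. Qed.
Lemma cR_div (f g : T -> R) x : continuous f x -> continuous g x -> g x <> 0 ->
  continuous (fun y => f y / g y) x.
Proof. intros; apply cR_mult; auto; apply cR_inv; auto. Qed.
Lemma cR_pow2 (f : T -> R) x : continuous f x -> continuous (fun y => f y ^ 2) x.
Proof. intros. apply (continuous_ext (fun y => f y * f y)).
  - intros y; simpl; ring.
  - apply cR_mult; auto. Qed.
Lemma cR_eps (f : T -> R) x : continuous f x <->
  forall eps : posreal, locally x (fun y => Rabs (f y - f x) < eps).
Proof.
  unfold continuous. rewrite filterlim_locally. split; intros H eps;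
  specialize (H eps); revert H; apply filter_imp; intros y; rewrite ballR; auto.
Qed.
End C.

Lemma c_fst {U V : UniformSpace} (p : U * V) : continuous fst p.
Proof. destruct p; apply continuous_fst. Qed.
Lemma c_snd {U V : UniformSpace} (p : U * V) : continuous snd p.
Proof. destruct p; apply continuous_snd. Qed.

Lemma c_comp {U V W : UniformSpace} (f : U -> V) (g : V -> W) x :
  continuous f x -> (forall y, continuous g y) -> continuous (fun x => g (f x)) x.
Proof. intros; apply continuous_comp; auto. Qed.

Lemma c_pair {U V W : UniformSpace} (f : U -> V) (g : U -> W) x :
  continuous f x -> continuous g x -> continuous (fun x => (f x, g x)) x.
Proof.
  intros. apply (continuous_comp_2 f g pair); auto.
  apply (continuous_ext (fun y => y)). intros [a b]; reflexivity. apply continuous_id.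
Qed.

Lemma c_swap (h : R * R -> R) : (forall q, continuous h q) ->
  forall q, continuous (fun q => h (snd q, fst q)) q.
Proof. intros H q. apply (c_comp (fun q : R*R => (snd q, fst q)) h); auto.
  apply c_pair; [apply c_snd|apply c_fst]. Qed.

Lemma c_uncurry (h : R * R -> R) : (forall q, continuous h q) ->
  forall q, continuous (fun q => h (fst q, snd q)) q.
Proof. intros H q. apply (continuous_ext h). intros [a b]; reflexivity. auto. Qed.

Lemma loc_gt {T : UniformSpace} (g : T -> R) x c : continuous g x -> g x > c ->
  locally x (fun t => g t > c).
Proof.
  intros Hc Hg. rewrite cR_eps in Hc.
  assert (Hp : 0 < g x - c) by lra.
  specialize (Hc (mkposreal _ Hp)). revert Hc. apply filter_imp. simpl. intros y H.
  apply Rabs_def2 in H. lra.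
Qed.

Definition DD (F dF : R -> R -> R) (s t u : R) : R :=
  if Req_dec_T s t then dF s u else (F s u - F t u) / (s - t).

Lemma DD_id F dF s t u : F s u - F t u = (s - t) * DD F dF s t u.
Proof. unfold DD; destruct (Req_dec_T s t). subst; ring. field. lra. Qed.

Lemma DD_zero F dF s t u : F s u = 0 -> F t u = 0 -> dF s u = 0 -> DD F dF s t u = 0.
Proof. intros; unfold DD; destruct (Req_dec_T s t). auto. rewrite H, H0. field. lra. Qed.

Lemma DD_mvt (F dF : R -> R -> R) (H1 : forall s u, is_derive (fun t => F t u) s (dF s u)) s t u :
  exists c, Rmin t s <= c <= Rmax t s /\ DD F dF s t u = dF c u.
Proof.
  unfold DD; destruct (Req_dec_T s t).
  - subst. exists t. split; auto. split; [apply Rmin_l|apply Rmax_l].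
  - destruct (MVT_gen (fun x => F x u) t s (fun c => dF c u)) as [c [Hc He]].
    + intros; apply H1.
    + intros. apply continuity_pt_filterlim. apply (ex_derive_continuous (fun x => F x u)).
      eexists; apply H1.
    + exists c; split; auto. simpl in He. rewrite He. field. lra.
Qed.

Lemma DD_bound (F dF : R -> R -> R) (H1 : forall s u, is_derive (fun t => F t u) s (dF s u)) Bd
  (Hb : forall s u, Rabs (dF s u) <= Bd) s t u : Rabs (DD F dF s t u) <= Bd.
Proof. destruct (DD_mvt F dF H1 s t u) as [c [_ ->]]. auto. Qed.

Lemma Rmin_Rmax_in a b c x d : Rmin a b <= c <= Rmax a b ->
  Rabs (a - x) < d -> Rabs (b - x) < d -> Rabs (c - x) < d.
Proof.
  unfold Rmin, Rmax; destruct (Rle_dec a b); intros [H H'] Ha Hb;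
  apply Rabs_def2 in Ha; apply Rabs_def2 in Hb; apply Rabs_def1; lra.
Qed.

Lemma Cont_DD (F dF : R -> R -> R) (H1 : forall s u, is_derive (fun t => F t u) s (dF s u))
  (Hc : forall q, continuous (fun q : R * R => dF (fst q) (snd q)) q)
  (HF : forall q, continuous (fun q : R * R => F (fst q) (snd q)) q) :
  forall w : R * (R * R),
    continuous (fun w : R * (R * R) => DD F dF (fst w) (fst (snd w)) (snd (snd w))) w.
Proof.
  intros [s0 [t0 u0]].
  destruct (Req_dec_T s0 t0) as [e|n].
  - subst t0. apply cR_eps. intros eps.
    specialize (Hc (s0, u0)). rewrite cR_eps in Hc. specialize (Hc eps).
    destruct Hc as [d Hd].
    exists d. intros [s [t u]] Hb.
    destruct Hb as [Hs [Ht Hu]]. simpl in *.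
    rewrite ballR in Hs, Ht, Hu.
    unfold DD at 2. destruct (Req_dec_T s0 s0) as [_|C]; [|congruence].
    destruct (DD_mvt F dF H1 s t u) as [c [Hcc ->]].
    apply (Hd (c, u)). split; simpl; rewrite ballR; auto.
    apply (Rmin_Rmax_in t s); auto.
  - assert (Hp : 0 < Rabs (s0 - t0) / 2).
    { assert (0 < Rabs (s0 - t0)) by (apply Rabs_pos_lt; lra). lra. }
    apply (continuous_ext_loc _ (fun w : R * (R * R) =>
       (F (fst w) (snd (snd w)) - F (fst (snd w)) (snd (snd w))) / (fst w - fst (snd w)))).
    + exists (mkposreal _ Hp). intros [s [t u]] [Hs [Ht Hu]]. simpl in *.
      rewrite ballR in Hs, Ht. unfold DD. destruct (Req_dec_T s t).
      * subst. exfalso.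
        assert (Rabs (s0 - t0) <= Rabs (s0 - t) + Rabs (t - t0)).
        { replace (s0 - t0) with ((s0 - t) + (t - t0)) by ring. apply Rabs_triang. }
        rewrite Rabs_minus_sym in Hs. lra.
      * reflexivity.
    + apply cR_div.
      * apply cR_minus.
        -- apply (continuous_comp_2 fst (fun w : R * (R * R) => snd (snd w)) F).
           apply c_fst. apply (c_comp snd snd). apply c_snd. apply c_snd. apply HF.
        -- apply (continuous_comp_2 (fun w : R * (R * R) => fst (snd w)) (fun w : R * (R * R) => snd (snd w)) F).
           apply (c_comp snd fst). apply c_snd. apply c_fst.
           apply (c_comp snd snd). apply c_snd. apply c_snd. apply HF.
      * apply cR_minus. apply c_fst. apply (c_comp snd fst). apply c_snd. apply c_fst.
      * simpl. lra.
Qed.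

Definition sq2 (q : pt2) : R := fst q ^ 2 + snd q ^ 2.
Definition supp (f : pt2 -> R) (S : R) : Prop := forall q, sq2 q > S ^ 2 -> f q = 0.

Lemma norm2_gt q S : 0 <= S -> sq2 q > S ^ 2 -> norm2 q > S.
Proof.
  intros HS Hq. unfold norm2. rewrite <- (sqrt_pow2 S HS).
  apply sqrt_lt_1_alt. unfold sq2 in Hq. split. nra. lra.
Qed.

Lemma supp_of_cs f : compact_support2 f -> exists S, 0 <= S /\ supp f S.
Proof.
  intros [M HM]. exists (Rmax M 0). split. apply Rmax_r.
  intros q Hq. apply HM.
  apply Rle_lt_trans with (Rmax M 0). apply Rmax_l.
  apply norm2_gt; auto. apply Rmax_r.
Qed.

Lemma supp_mono f S S' : S <= S' -> 0 <= S -> supp f S -> supp f S'.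
Proof. intros H H0 Hs q Hq. apply Hs. nra. Qed.

Lemma pd_zero f S b : 0 <= S -> supp f S -> forall q, sq2 q > S ^ 2 -> pd b f q = 0.
Proof.
  intros HS Hs [q1 q2] Hq. unfold pd. destruct b; simpl.
  - rewrite (Derive_ext_loc _ (fun _ => 0)). apply Derive_const.
    assert (Hc : continuous (fun t : R => sq2 (t, q2)) q1).
    { apply (ex_derive_continuous (fun t : R => sq2 (t, q2))). unfold sq2; simpl. auto_derive. auto. }
    apply (loc_gt _ _ _ Hc) in Hq. revert Hq. apply filter_imp. intros t Ht. apply Hs. auto.
  - rewrite (Derive_ext_loc _ (fun _ => 0)). apply Derive_const.
    assert (Hc : continuous (fun t : R => sq2 (q1, t)) q2).
    { apply (ex_derive_continuous (fun t : R => sq2 (q1, t))). unfold sq2; simpl. auto_derive. auto. }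
    apply (loc_gt _ _ _ Hc) in Hq. revert Hq. apply filter_imp. intros t Ht. apply Hs. auto.
Qed.

Lemma chain (F : R -> R) S d : 0 <= S -> 0 < d ->
  (forall v w, Rabs v <= S -> Rabs w <= S -> Rabs (v - w) < d -> Rabs (F v - F w) < 1) ->
  forall n : nat, forall v, Rabs v <= S -> Rabs v <= INR n * (d / 2) ->
    Rabs (F v) <= Rabs (F 0) + INR n.
Proof.
  intros HS Hd HF n. induction n as [|n IH]; intros v Hv Hn.
  - simpl in Hn. assert (v = 0). { pose proof (Rabs_pos v). apply Rabs_eq_0. lra. }
    subst. simpl. lra.
  - rewrite S_INR in *. pose proof (pos_INR n).
    assert (Htri : forall a b, Rabs (F a) <= Rabs (F b) + Rabs (F a - F b)).
    { intros a b. replace (F a) with (F b + (F a - F b)) at 1 by ring. apply Rabs_triang. }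
    apply Rabs_le_between in Hv. apply Rabs_le_between in Hn.
    destruct (Rle_dec (d/2) v).
    + assert (H1 : Rabs (F v - F (v - d/2)) < 1).
      { apply HF; try (apply Rabs_le_between; lra). apply Rabs_lt_between; lra. }
      assert (H2 : Rabs (F (v - d/2)) <= Rabs (F 0) + INR n).
      { apply IH; apply Rabs_le_between; nra. }
      pose proof (Htri v (v - d/2)). lra.
    + destruct (Rle_dec v (-(d/2))).
      * assert (H1 : Rabs (F v - F (v + d/2)) < 1).
        { apply HF; try (apply Rabs_le_between; lra). apply Rabs_lt_between; lra. }
        assert (H2 : Rabs (F (v + d/2)) <= Rabs (F 0) + INR n).
        { apply IH; apply Rabs_le_between; nra. }
        pose proof (Htri v (v + d/2)). lra.
      * assert (H1 : Rabs (F v - F 0) < 1).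
        { apply HF; try (apply Rabs_le_between; lra). apply Rabs_lt_between; lra. }
        pose proof (Htri v 0). lra.
Qed.

Lemma unif2 (f : pt2 -> R) : (forall q, continuous f q) -> forall S,
  exists d, 0 < d /\ forall p q : pt2,
    Rabs (fst p) <= S -> Rabs (snd p) <= S -> Rabs (fst q) <= S -> Rabs (snd q) <= S ->
    Rabs (fst p - fst q) < d -> Rabs (snd p - snd q) < d -> Rabs (f p - f q) < 1.
Proof.
  intros Hf S.
  assert (H' : forall t : Compactness.Tn 2 R, exists r : posreal, forall q : pt2,
     Rabs (fst q - fst t) < 2 * r -> Rabs (snd q - fst (snd t)) < 2 * r ->
     Rabs (f q - f (fst t, fst (snd t))) < 1/2).
  { intros t. pose proof (Hf (fst t, fst (snd t))) as Hc. rewrite cR_eps in Hc.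
    assert (Hh : 0 < 1/2) by lra. destruct (Hc (mkposreal _ Hh)) as [r Hr].
    assert (Hr2 : 0 < r / 2) by (destruct r; simpl; lra).
    exists (mkposreal _ Hr2). simpl. intros q H1 H2. apply (Hr q).
    split; simpl; rewrite ballR; lra. }
  set (delta := fun t => proj1_sig (constructive_indefinite_description _ (H' t))).
  assert (Hdelta : forall t (q : pt2),
     Rabs (fst q - fst t) < 2 * delta t -> Rabs (snd q - fst (snd t)) < 2 * delta t ->
     Rabs (f q - f (fst t, fst (snd t))) < 1/2).
  { intros t. exact (proj2_sig (constructive_indefinite_description _ (H' t))). }
  destruct (compactness_value 2 (-S, (-S, tt)) (S, (S, tt)) delta) as [d0 Hd0].
  exists d0. split. apply cond_pos.
  intros [p1 p2] [q1 q2] Hp1 Hp2 Hq1 Hq2 H1 H2. simpl in *.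
  apply NNPP; intro Hn. apply (Hd0 (p1, (p2, tt))).
  { simpl. apply Rabs_le_between in Hp1. apply Rabs_le_between in Hp2. tauto. }
  intros [t [Hbt [Hcl Hle]]]. apply Hn. destruct t as [t1 [t2 []]]. simpl in Hcl.
  destruct Hcl as [Hc1 [Hc2 _]].
  assert (Hpd : Rabs (f (p1, p2) - f (t1, t2)) < 1/2).
  { apply (Hdelta (t1, (t2, tt))); simpl; pose proof (cond_pos (delta (t1,(t2,tt)))); lra. }
  assert (Hqd : Rabs (f (q1, q2) - f (t1, t2)) < 1/2).
  { apply (Hdelta (t1, (t2, tt))); simpl.
    - replace (q1 - t1) with ((q1 - p1) + (p1 - t1)) by ring.
      eapply Rle_lt_trans. apply Rabs_triang. rewrite Rabs_minus_sym in H1. lra.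
    - replace (q2 - t2) with ((q2 - p2) + (p2 - t2)) by ring.
      eapply Rle_lt_trans. apply Rabs_triang. rewrite Rabs_minus_sym in H2. lra. }
  replace (f (p1, p2) - f (q1, q2)) with ((f (p1, p2) - f (t1, t2)) - (f (q1, q2) - f (t1, t2))) by ring.
  eapply Rle_lt_trans. apply Rabs_triang. rewrite Rabs_Ropp. lra.
Qed.

Lemma bounded2 (f : pt2 -> R) S : 0 <= S -> (forall q, continuous f q) -> supp f S ->
  exists B, 0 <= B /\ forall q, Rabs (f q) <= B.
Proof.
  intros HS Hf Hs. destruct (unif2 f Hf S) as [d [Hd Hu]].
  destruct (INR_unbounded (S / (d / 2))) as [n Hn].
  assert (Hnd : S <= INR n * (d / 2)).
  { apply Rmult_gt_compat_r with (r := d/2) in Hn; [|lra].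
    unfold Rdiv in Hn. rewrite Rmult_assoc, Rinv_l in Hn by lra. lra. }
  exists (Rabs (f (0, 0)) + 2 * INR n). split. pose proof (pos_INR n). pose proof (Rabs_pos (f (0,0))). lra.
  intros [q1 q2].
  destruct (Rle_dec (Rabs q1) S) as [h1|h1]; [destruct (Rle_dec (Rabs q2) S) as [h2|h2]|].
  - assert (A1 : Rabs (f (q1, 0)) <= Rabs (f (0, 0)) + INR n).
    { apply (chain (fun v => f (v, 0)) S d); auto; try lra.
      intros v w Hv Hw Hvw. apply Hu; simpl; auto; rewrite ?Rminus_0_r, ?Rabs_R0; lra. }
    assert (A2 : Rabs (f (q1, q2)) <= Rabs (f (q1, 0)) + INR n).
    { apply (chain (fun v => f (q1, v)) S d); auto; try lra.
      intros v w Hv Hw Hvw. apply Hu; simpl; auto; rewrite ?Rminus_diag, ?Rabs_R0; lra. }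
    lra.
  - rewrite Hs. rewrite Rabs_R0. pose proof (pos_INR n). pose proof (Rabs_pos (f (0,0))). lra.
    unfold sq2; cbn [fst snd]. apply Rnot_le_lt in h2. pose proof (Rabs_pos q2).
    rewrite <- (pow2_abs q2). pose proof (pow2_ge_0 q1). nra.
  - rewrite Hs. rewrite Rabs_R0. pose proof (pos_INR n). pose proof (Rabs_pos (f (0,0))). lra.
    unfold sq2; cbn [fst snd]. apply Rnot_le_lt in h1. pose proof (Rabs_pos q1).
    rewrite <- (pow2_abs q1). pose proof (pow2_ge_0 q2). nra.
Qed.

Lemma grad_g_eq z : sq2 z > 0 -> grad_g z = (- fst z / sq2 z, - snd z / sq2 z).
Proof.
  destruct z as [a b]. unfold sq2; cbn [fst snd]. intros Hr.
  pose proof (sqrt_sqrt (a^2+b^2)) as H1. pose proof (sqrt_lt_R0 (a^2+b^2) Hr) as H2.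
  assert (E : a * (a * 1) + b * (b * 1) = a^2 + b^2) by ring.
  unfold grad_g, pd, g, norm2; cbn [fst snd]. f_equal.
  - apply is_derive_unique. auto_derive.
    + split. lra. split. apply sqrt_lt_R0. lra. auto.
    + rewrite E. set (s := sqrt (a^2+b^2)) in *. rewrite <- H1 by lra. field. lra.
  - apply is_derive_unique. auto_derive.
    + split. lra. split. apply sqrt_lt_R0. lra. auto.
    + rewrite E. set (s := sqrt (a^2+b^2)) in *. rewrite <- H1 by lra. field. lra.
Qed.

Lemma sq2_pos z : z <> origin2 -> sq2 z > 0.
Proof.
  destruct z as [a b]; unfold sq2, origin2; cbn [fst snd]; intros H.
  pose proof (pow2_ge_0 a); pose proof (pow2_ge_0 b).
  destruct (Req_dec a 0) as [Ha|Ha]; [destruct (Req_dec b 0) as [Hb|Hb]|].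
  - subst; congruence.
  - assert (b ^ 2 > 0) by (apply pow_lt; nra; fail) || nra. nra.
  - nra.
Qed.

Lemma c_sq2 z : continuous sq2 z.
Proof. apply cR_plus; apply cR_pow2; [apply c_fst|apply c_snd]. Qed.

Lemma Qbdd (h : pt2 -> R) : (forall z, continuous h z) ->
  (forall z, sq2 z > 0 -> Rabs (h z) <= sq2 z) ->
  bdd_cont_punctured (fun z => h z / sq2 z).
Proof.
  intros Hc Hb. split.
  - intros z Hz. apply cR_div; auto. apply c_sq2. apply sq2_pos in Hz. lra.
  - exists 1. intros z Hz. apply sq2_pos in Hz. unfold Rdiv. rewrite Rabs_mult.
    rewrite Rabs_inv, (Rabs_pos_eq (sq2 z)) by lra.
    apply (Rmult_le_reg_r (sq2 z)). lra. rewrite Rmult_assoc, Rinv_l by lra.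
    specialize (Hb z Hz). lra.
Qed.

Lemma vanish (G : pt2 * pt2 -> R) K S : 0 <= K -> 0 <= S ->
  (forall p, Rabs (G p) <= (K + K * (Rabs (fst (fst p) - fst (snd p)) + Rabs (snd (fst p) - snd (snd p))))
                         / (1 + sq2 (sub2 (fst p) (snd p)))) ->
  (forall p, sq2 (fst p) > S ^ 2 -> sq2 (snd p) > S ^ 2 -> sq2 (fst (snd p), snd (fst p)) > S ^ 2 -> G p = 0) ->
  forall eps : R, eps > 0 -> exists M : R, forall p, norm4 p > M -> Rabs (G p) < eps.
Proof.
  intros HK HS Hb Hz eps He.
  set (L := 4 * K / eps + 1). set (R0 := L ^ 2 + 2 * K / eps + 1).
  assert (HL : L > 4 * K / eps). { unfold L; lra. }
  assert (HL0 : 0 < L). { unfold L. assert (0 <= 4 * K / eps) by (apply Rmult_le_pos; [lra|left; apply Rinv_0_lt_compat; lra]). lra. }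
  assert (HR0 : R0 > 2 * K / eps). { unfold R0. pose proof (pow2_ge_0 L). lra. }
  exists (6 * S ^ 2 + 8 * R0 + 1).
  intros [[x1 x2] [y1 y2]] Hn. specialize (Hb ((x1, x2), (y1, y2))). specialize (Hz ((x1, x2), (y1, y2))).
  unfold sq2, sub2 in Hb, Hz. unfold norm4 in Hn. cbn [fst snd] in Hb, Hz, Hn.
  set (z1 := x1 - y1) in *. set (z2 := x2 - y2) in *.
  set (r := z1 ^ 2 + z2 ^ 2) in *.
  assert (Hr0 : 0 <= r) by (unfold r; pose proof (pow2_ge_0 z1); pose proof (pow2_ge_0 z2); lra).
  assert (HS2 : 0 <= S ^ 2) by apply pow2_ge_0.
  assert (HR0p : 1 <= R0). { unfold R0. pose proof (pow2_ge_0 L). assert (0 <= 2 * K / eps) by (apply Rmult_le_pos; [lra|left; apply Rinv_0_lt_compat; lra]). lra. }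
  assert (HLR : L * L <= R0). { unfold R0. simpl. assert (0 <= 2 * K / eps) by (apply Rmult_le_pos; [lra|left; apply Rinv_0_lt_compat; lra]). lra. }
  destruct (Rle_dec R0 r) as [Hbig|Hsmall].
  - eapply Rle_lt_trans. apply Hb.
    assert (Hz1 : L * Rabs z1 <= r).
    { destruct (Rle_dec (Rabs z1) L).
      + assert (L * Rabs z1 <= L * L) by (apply Rmult_le_compat_l; lra).
        lra.
      + assert (L * Rabs z1 <= Rabs z1 * Rabs z1) by (apply Rmult_le_compat_r; [apply Rabs_pos|lra]).
        assert (Rabs z1 * Rabs z1 = z1 ^ 2) by (rewrite <- Rabs_mult; rewrite Rabs_pos_eq; [ring|nra]).
        unfold r. pose proof (pow2_ge_0 z2). lra. }
    assert (Hz2 : L * Rabs z2 <= r).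
    { destruct (Rle_dec (Rabs z2) L).
      + assert (L * Rabs z2 <= L * L) by (apply Rmult_le_compat_l; lra).
        lra.
      + assert (L * Rabs z2 <= Rabs z2 * Rabs z2) by (apply Rmult_le_compat_r; [apply Rabs_pos|lra]).
        assert (Rabs z2 * Rabs z2 = z2 ^ 2) by (rewrite <- Rabs_mult; rewrite Rabs_pos_eq; [ring|nra]).
        unfold r. pose proof (pow2_ge_0 z1). lra. }
    apply (Rmult_lt_reg_r (1 + r)). lra. unfold Rdiv. rewrite Rmult_assoc, Rinv_l by lra. rewrite Rmult_1_r.
    assert (Hs : L * (Rabs z1 + Rabs z2) <= 2 * r) by lra.
    assert (HKL : 4 * K < eps * L).
    { unfold Rdiv in HL. apply (Rmult_lt_compat_r eps) in HL; auto.
      rewrite Rmult_assoc, Rinv_l, Rmult_1_r in HL by lra. lra. }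
    assert (HKe : 2 * K < eps * r).
    { unfold Rdiv in HR0. assert (R0 * eps > 2 * K) by (apply (Rmult_lt_compat_r eps) in HR0; auto;
      rewrite Rmult_assoc, Rinv_l, Rmult_1_r in HR0 by lra; lra). nra. }
    assert (Hq1 : 2 * K * (L * (Rabs z1 + Rabs z2)) <= 4 * K * r).
    { assert (0 <= 2 * K) by lra. apply Rmult_le_compat_l with (r := 2 * K) in Hs; lra. }
    assert (Hq2 : 4 * K * r <= eps * L * r).
    { apply Rmult_le_compat_r; lra. }
    assert (Hq3 : (2 * K * (Rabs z1 + Rabs z2)) * L <= (eps * r) * L) by lra.
    apply Rmult_le_reg_r in Hq3; auto. lra.
  - apply Rnot_le_lt in Hsmall.
    assert (HX : x1 ^ 2 + x2 ^ 2 + y1 ^ 2 + y2 ^ 2 > (6 * S ^ 2 + 8 * R0 + 1) ^ 2).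
    { apply Rnot_le_lt. intro C. apply sqrt_le_1_alt in C. rewrite sqrt_pow2 in C by lra. lra. }
    assert (HM : (6 * S ^ 2 + 8 * R0 + 1) ^ 2 >= 6 * S ^ 2 + 8 * R0 + 1) by nra.
    assert (E1 : y1 ^ 2 <= 2 * x1 ^ 2 + 2 * z1 ^ 2) by (unfold z1; pose proof (pow2_ge_0 (2*x1 - y1)); nra).
    assert (E2 : y2 ^ 2 <= 2 * x2 ^ 2 + 2 * z2 ^ 2) by (unfold z2; pose proof (pow2_ge_0 (2*x2 - y2)); nra).
    assert (E3 : x1 ^ 2 <= 2 * y1 ^ 2 + 2 * z1 ^ 2) by (unfold z1; pose proof (pow2_ge_0 (x1 - 2*y1)); nra).
    assert (E4 : x2 ^ 2 <= 2 * y2 ^ 2 + 2 * z2 ^ 2) by (unfold z2; pose proof (pow2_ge_0 (x2 - 2*y2)); nra).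
    assert (Ha : x1 ^ 2 + x2 ^ 2 > S ^ 2) by (unfold r in *; lra).
    assert (Hb' : y1 ^ 2 + y2 ^ 2 > S ^ 2) by (unfold r in *; lra).
    assert (Hc : y1 ^ 2 + x2 ^ 2 > S ^ 2) by (unfold r in *; pose proof (pow2_ge_0 x1); lra).
    pose proof (Hz Ha Hb' Hc) as E. cbv zeta in E. 
    apply Rle_lt_trans with 0; [|lra]. right. rewrite <- Rabs_R0. f_equal. exact E.
Qed.

Definition Aof (f : pt2 -> R) (p : pt2 * pt2) : R :=
  DD (fun s u => f (s, u)) (fun s u => pd true f (s, u)) (fst (fst p)) (fst (snd p)) (snd (fst p)).
Definition Bof (f : pt2 -> R) (p : pt2 * pt2) : R :=
  DD (fun a b => f (b, a)) (fun a b => pd false f (b, a)) (snd (fst p)) (snd (snd p)) (fst (snd p)).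

Ltac cproj := first [apply c_fst | apply c_snd |
  apply (c_comp fst fst); [apply c_fst | intros; apply c_fst] |
  apply (c_comp snd fst); [apply c_snd | intros; apply c_fst] |
  apply (c_comp fst snd); [apply c_fst | intros; apply c_snd] |
  apply (c_comp snd snd); [apply c_snd | intros; apply c_snd]].

Section F.
Variable f : pt2 -> R.
Hypothesis Hs : smooth2 f.

Lemma decomp x y : f x - f y = (fst x - fst y) * Aof f (x, y) + (snd x - snd y) * Bof f (x, y).
Proof.
  destruct x as [x1 x2], y as [y1 y2]. unfold Aof, Bof; cbn [fst snd].
  rewrite <- (DD_id (fun s u => f (s, u))), <- (DD_id (fun a b => f (b, a))). ring.
Qed.

Lemma HderA : forall s u, is_derive (fun t => f (t, u)) s (pd true f (s, u)).
Proof. intros s u. pose proof (proj2 Hs nil true (s, u)) as H. simpl in H.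
  apply Derive_correct in H. exact H. Qed.
Lemma HderB : forall s u, is_derive (fun t => f (u, t)) s (pd false f (u, s)).
Proof. intros s u. pose proof (proj2 Hs nil false (u, s)) as H. simpl in H.
  apply Derive_correct in H. exact H. Qed.

Lemma cont_f : forall q, continuous f q.
Proof. intros q. exact (proj1 Hs nil q). Qed.
Lemma cont_pd b : forall q, continuous (pd b f) q.
Proof. intros q. exact (proj1 Hs (b :: nil) q). Qed.

Lemma cont_A : forall p, continuous (Aof f) p.
Proof.
  intros p. unfold Aof.
  apply (continuous_comp_2 (fun p : pt2 * pt2 => fst (fst p))
     (fun p : pt2 * pt2 => (fst (snd p), snd (fst p)))
     (fun s tu => DD (fun s u => f (s, u)) (fun s u => pd true f (s, u)) s (fst tu) (snd tu))).
  - cproj.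
  - apply (c_pair (fun p : pt2*pt2 => fst (snd p)) (fun p : pt2*pt2 => snd (fst p))); cproj.
  - apply (Cont_DD (fun s u => f (s, u)) (fun s u => pd true f (s, u)) HderA).
    + apply c_uncurry. apply cont_pd.
    + apply c_uncurry. apply cont_f.
Qed.

Lemma cont_B : forall p, continuous (Bof f) p.
Proof.
  intros p. unfold Bof.
  apply (continuous_comp_2 (fun p : pt2 * pt2 => snd (fst p))
     (fun p : pt2 * pt2 => (snd (snd p), fst (snd p)))
     (fun s tu => DD (fun a b => f (b, a)) (fun a b => pd false f (b, a)) s (fst tu) (snd tu))).
  - cproj.
  - apply (c_pair (fun p : pt2*pt2 => snd (snd p)) (fun p : pt2*pt2 => fst (snd p))); cproj.
  - apply (Cont_DD (fun a b => f (b, a)) (fun a b => pd false f (b, a)) HderB).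
    + apply (c_swap (pd false f)). apply cont_pd.
    + apply (c_swap f). apply cont_f.
Qed.

Lemma bound_A Bd : (forall q, Rabs (pd true f q) <= Bd) -> forall p, Rabs (Aof f p) <= Bd.
Proof. intros H p. unfold Aof. apply (DD_bound _ _ HderA). intros; apply H. Qed.
Lemma bound_B Bd : (forall q, Rabs (pd false f q) <= Bd) -> forall p, Rabs (Bof f p) <= Bd.
Proof. intros H p. unfold Bof. apply (DD_bound _ _ HderB). intros; apply H. Qed.

Lemma zero_AB S : 0 <= S -> supp f S -> forall p,
  sq2 (fst p) > S ^ 2 -> sq2 (snd p) > S ^ 2 -> sq2 (fst (snd p), snd (fst p)) > S ^ 2 ->
  Aof f p = 0 /\ Bof f p = 0 /\ f (fst p) = 0 /\ f (snd p) = 0.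
Proof.
  intros HS Hsp [[x1 x2] [y1 y2]] H1 H2 H3. cbn [fst snd] in *.
  unfold Aof, Bof; cbn [fst snd]. split; [|split]; [apply DD_zero| apply DD_zero|split]; auto.
  apply (pd_zero f S true HS Hsp). auto.
  apply (pd_zero f S false HS Hsp). auto.
Qed.
End F.

Lemma bnd_div X Y r : 0 <= r -> Rabs X <= Y -> Rabs (- X / (1 + r)) <= Y / (1 + r).
Proof.
  intros Hr H. unfold Rdiv. rewrite Rabs_mult, Rabs_Ropp, Rabs_inv, (Rabs_pos_eq (1 + r)) by lra.
  apply Rmult_le_compat_r. left; apply Rinv_0_lt_compat; lra. auto.
Qed.

Lemma bnd_T a b d1 d2 C : Rabs d1 <= C -> Rabs d2 <= C -> Rabs (a * d1 + b * d2) <= C * (Rabs a + Rabs b).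
Proof.
  intros H1 H2. eapply Rle_trans. apply Rabs_triang. rewrite !Rabs_mult.
  pose proof (Rabs_pos a); pose proof (Rabs_pos b). nra.
Qed.

Lemma bnd_diff (f : pt2 -> R) C : (forall q, Rabs (f q) <= C) -> forall x y, Rabs (f x - f y) <= 2 * C.
Proof. intros H x y. unfold Rminus. eapply Rle_trans. apply Rabs_triang. rewrite Rabs_Ropp.
  pose proof (H x); pose proof (H y). lra. Qed.

Lemma cont_r : forall p : pt2 * pt2, continuous (fun p => sq2 (sub2 (fst p) (snd p))) p.
Proof.
  intros p. apply (c_comp (fun p : pt2 * pt2 => sub2 (fst p) (snd p)) sq2).
  - apply (continuous_ext (fun p : pt2 * pt2 => (fst (fst p) - fst (snd p), snd (fst p) - snd (snd p)))).
    intros; reflexivity.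
    apply (c_pair (fun p : pt2 * pt2 => fst (fst p) - fst (snd p)) (fun p : pt2 * pt2 => snd (fst p) - snd (snd p))).
    apply (cR_minus (fun p : pt2 * pt2 => fst (fst p)) (fun p : pt2 * pt2 => fst (snd p))); cproj.
    apply (cR_minus (fun p : pt2 * pt2 => snd (fst p)) (fun p : pt2 * pt2 => snd (snd p))); cproj.
  - apply c_sq2.
Qed.

Lemma cont_T (f1 f2 : pt2 -> R) : (forall q, continuous f1 q) -> (forall q, continuous f2 q) ->
  forall p : pt2 * pt2, continuous (fun p => (fst (fst p) - fst (snd p)) * (f1 (fst p) - f1 (snd p))
     + (snd (fst p) - snd (snd p)) * (f2 (fst p) - f2 (snd p))) p.
Proof.
  intros H1 H2 p.
  apply cR_plus; apply cR_mult.
  - apply (cR_minus (fun p : pt2 * pt2 => fst (fst p)) (fun p : pt2 * pt2 => fst (snd p))); cproj.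
  - apply (cR_minus (fun p : pt2 * pt2 => f1 (fst p)) (fun p : pt2 * pt2 => f1 (snd p))).
    apply (c_comp fst f1); auto; apply c_fst.
    apply (c_comp snd f1); auto; apply c_snd.
  - apply (cR_minus (fun p : pt2 * pt2 => snd (fst p)) (fun p : pt2 * pt2 => snd (snd p))); cproj.
  - apply (cR_minus (fun p : pt2 * pt2 => f2 (fst p)) (fun p : pt2 * pt2 => f2 (snd p))).
    apply (c_comp fst f2); auto; apply c_fst.
    apply (c_comp snd f2); auto; apply c_snd.
Qed.

Lemma core (f1 f2 : pt2 -> R) : smooth2 f1 -> smooth2 f2 -> compact_support2 f1 -> compact_support2 f2 ->
  exists G1 G2 G3 : pt2 * pt2 -> R,
    C00 G1 /\ C00 G2 /\ C00 G3 /\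
    forall x y : pt2, x <> y ->
      dot2 (grad_g (sub2 x y)) (f1 x - f1 y, f2 x - f2 y) =
        fst (sub2 x y) ^ 2 / sq2 (sub2 x y) * G1 (x, y)
        + fst (sub2 x y) * snd (sub2 x y) / sq2 (sub2 x y) * G2 (x, y)
        + snd (sub2 x y) ^ 2 / sq2 (sub2 x y) * G3 (x, y).
Proof.
  intros Hs1 Hs2 Hc1 Hc2.
  destruct (supp_of_cs _ Hc1) as [S1 [HS1 Hsp1]].
  destruct (supp_of_cs _ Hc2) as [S2 [HS2 Hsp2]].
  set (S := Rmax S1 S2).
  assert (HS : 0 <= S) by (unfold S; apply Rle_trans with S1; auto; apply Rmax_l).
  assert (Hsp1' : supp f1 S) by (apply (supp_mono f1 S1); auto; apply Rmax_l).
  assert (Hsp2' : supp f2 S) by (apply (supp_mono f2 S2); auto; apply Rmax_r).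
  destruct (bounded2 f1 S HS (cont_f f1 Hs1) Hsp1') as [C1 [HC1 HbC1]].
  destruct (bounded2 f2 S HS (cont_f f2 Hs2) Hsp2') as [C2 [HC2 HbC2]].
  destruct (bounded2 (pd true f1) S HS (cont_pd f1 Hs1 true) (pd_zero f1 S true HS Hsp1')) as [D1 [HD1 HbD1]].
  destruct (bounded2 (pd false f1) S HS (cont_pd f1 Hs1 false) (pd_zero f1 S false HS Hsp1')) as [D2 [HD2 HbD2]].
  destruct (bounded2 (pd true f2) S HS (cont_pd f2 Hs2 true) (pd_zero f2 S true HS Hsp2')) as [D3 [HD3 HbD3]].
  destruct (bounded2 (pd false f2) S HS (cont_pd f2 Hs2 false) (pd_zero f2 S false HS Hsp2')) as [D4 [HD4 HbD4]].
  set (K := 2 * (D1 + D2 + D3 + D4 + C1 + C2)).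
  assert (HK : 0 <= K) by (unfold K; lra).
  set (T := fun p : pt2 * pt2 => (fst (fst p) - fst (snd p)) * (f1 (fst p) - f1 (snd p))
     + (snd (fst p) - snd (snd p)) * (f2 (fst p) - f2 (snd p))).
  set (r := fun p : pt2 * pt2 => sq2 (sub2 (fst p) (snd p))).
  assert (Hr : forall p, 0 <= r p).
  { intros p; unfold r, sq2. pose proof (pow2_ge_0 (fst (sub2 (fst p) (snd p)))).
    pose proof (pow2_ge_0 (snd (sub2 (fst p) (snd p)))). lra. }
  assert (HT : forall p, Rabs (T p) <= K * (Rabs (fst (fst p) - fst (snd p)) + Rabs (snd (fst p) - snd (snd p)))).
  { intros p. unfold T. eapply Rle_trans. apply (bnd_T _ _ _ _ (2 * (C1 + C2))).
    - eapply Rle_trans. apply (bnd_diff f1 C1 HbC1). lra.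
    - eapply Rle_trans. apply (bnd_diff f2 C2 HbC2). lra.
    - apply Rmult_le_compat_r. pose proof (Rabs_pos (fst (fst p) - fst (snd p))).
      pose proof (Rabs_pos (snd (fst p) - snd (snd p))). lra. unfold K; lra. }
  assert (Hzero : forall p, sq2 (fst p) > S ^ 2 -> sq2 (snd p) > S ^ 2 -> sq2 (fst (snd p), snd (fst p)) > S ^ 2 ->
     Aof f1 p = 0 /\ Bof f1 p = 0 /\ Aof f2 p = 0 /\ Bof f2 p = 0 /\ T p = 0).
  { intros p H1 H2 H3.
    destruct (zero_AB f1 S HS Hsp1' p H1 H2 H3) as [a1 [b1 [c1 d1]]].
    destruct (zero_AB f2 S HS Hsp2' p H1 H2 H3) as [a2 [b2 [c2 d2]]].
    repeat split; auto. unfold T. rewrite c1, d1, c2, d2. ring. }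
  assert (Hcr : forall p, continuous r p) by apply cont_r.
  assert (HcT : forall p, continuous T p) by (apply cont_T; [apply cont_f; auto | apply cont_f; auto]).
  exists (fun p => - (Aof f1 p + T p) / (1 + r p)),
         (fun p => - (Bof f1 p + Aof f2 p) / (1 + r p)),
         (fun p => - (Bof f2 p + T p) / (1 + r p)).
  split; [|split; [|split]].
  - split.
    + intros p. apply (cR_div (fun p => - ((Aof f1) p + T p)) (fun p => 1 + r p)).
      apply (cR_opp (fun p => (Aof f1) p + T p)). apply (cR_plus (Aof f1) T). apply cont_A; auto. auto.
      apply (cR_plus (fun _ => 1) r). apply cR_const. auto. pose proof (Hr p). lra.
    + apply (vanish _ K S HK HS).
      * intros p. apply bnd_div. apply (Hr p). eapply Rle_trans. apply Rabs_triang.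
        pose proof (bound_A f1 Hs1 D1 HbD1 p). pose proof (HT p). assert (D1 <= K) by (unfold K; lra). lra.
      * intros p H1 H2 H3. destruct (Hzero p H1 H2 H3) as [a1 [b1 [a2 [b2 t]]]].
        rewrite a1, t. unfold Rdiv. ring.
  - split.
    + intros p. apply (cR_div (fun p => - ((Bof f1) p + (Aof f2) p)) (fun p => 1 + r p)).
      apply (cR_opp (fun p => (Bof f1) p + (Aof f2) p)). apply (cR_plus (Bof f1) (Aof f2)). apply cont_B; auto. apply cont_A; auto.
      apply (cR_plus (fun _ => 1) r). apply cR_const. auto. pose proof (Hr p). lra.
    + apply (vanish _ K S HK HS).
      * intros p. apply bnd_div. apply (Hr p). eapply Rle_trans. apply Rabs_triang.
        pose proof (bound_B f1 Hs1 D2 HbD2 p). pose proof (bound_A f2 Hs2 D3 HbD3 p).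
        pose proof (Rabs_pos (fst (fst p) - fst (snd p))).
        pose proof (Rabs_pos (snd (fst p) - snd (snd p))).
        assert (0 <= K * (Rabs (fst (fst p) - fst (snd p)) + Rabs (snd (fst p) - snd (snd p)))) by (apply Rmult_le_pos; lra).
        unfold K in *. lra.
      * intros p H1 H2 H3. destruct (Hzero p H1 H2 H3) as [a1 [b1 [a2 [b2 t]]]].
        rewrite b1, a2. unfold Rdiv. ring.
  - split.
    + intros p. apply (cR_div (fun p => - ((Bof f2) p + T p)) (fun p => 1 + r p)).
      apply (cR_opp (fun p => (Bof f2) p + T p)). apply (cR_plus (Bof f2) T). apply cont_B; auto. auto.
      apply (cR_plus (fun _ => 1) r). apply cR_const. auto. pose proof (Hr p). lra.
    + apply (vanish _ K S HK HS).
      * intros p. apply bnd_div. apply (Hr p). eapply Rle_trans. apply Rabs_triang.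
        pose proof (bound_B f2 Hs2 D4 HbD4 p). pose proof (HT p). assert (D4 <= K) by (unfold K; lra). lra.
      * intros p H1 H2 H3. destruct (Hzero p H1 H2 H3) as [a1 [b1 [a2 [b2 t]]]].
        rewrite b2, t. unfold Rdiv. ring.
  - intros x y Hxy.
    assert (Hz : sq2 (sub2 x y) > 0).
    { apply sq2_pos. intro E. apply Hxy. destruct x as [x1 x2], y as [y1 y2].
      unfold sub2, origin2 in E; cbn [fst snd] in E. injection E; intros. f_equal; lra. }
    rewrite (grad_g_eq _ Hz). unfold dot2, T, r. cbn [fst snd].
    rewrite (decomp f1 x y), (decomp f2 x y).
    revert Hz. unfold sq2, sub2. cbn [fst snd]. intros Hz.
    field. lra.
Qed.

Theorem lemma6p2 :
  exists Q1 Q2 Q3 : pt2 -> R,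
    bdd_cont_punctured Q1 /\ bdd_cont_punctured Q2 /\ bdd_cont_punctured Q3 /\
    forall phi : pt2 -> pt2, Cinf_c phi ->
      exists G1 G2 G3 : pt2 * pt2 -> R,
        C00 G1 /\ C00 G2 /\ C00 G3 /\
        forall x y : pt2, x <> y ->
          dot2 (grad_g (sub2 x y)) (sub2 (phi x) (phi y)) =
            Q1 (sub2 x y) * G1 (x, y) + Q2 (sub2 x y) * G2 (x, y)
            + Q3 (sub2 x y) * G3 (x, y).
Proof.
  exists (fun z => fst z ^ 2 / sq2 z), (fun z => fst z * snd z / sq2 z), (fun z => snd z ^ 2 / sq2 z).
  split; [|split; [|split]].
  - apply (Qbdd (fun z => fst z ^ 2)). intros; apply cR_pow2; apply c_fst.
    intros z Hz. unfold sq2 in *. rewrite Rabs_pos_eq by apply pow2_ge_0.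
    pose proof (pow2_ge_0 (snd z)). lra.
  - apply (Qbdd (fun z => fst z * snd z)). intros; apply cR_mult; [apply c_fst|apply c_snd].
    intros z Hz. unfold sq2 in *. rewrite Rabs_mult.
    rewrite <- (pow2_abs (fst z)), <- (pow2_abs (snd z)).
    pose proof (pow2_ge_0 (Rabs (fst z) - Rabs (snd z))). pose proof (Rabs_pos (fst z)). pose proof (Rabs_pos (snd z)). nra.
  - apply (Qbdd (fun z => snd z ^ 2)). intros; apply cR_pow2; apply c_snd.
    intros z Hz. unfold sq2 in *. rewrite Rabs_pos_eq by apply pow2_ge_0.
    pose proof (pow2_ge_0 (fst z)). lra.
  - intros phi [Hs1 [Hs2 [Hc1 Hc2]]].
    destruct (core _ _ Hs1 Hs2 Hc1 Hc2) as [G1 [G2 [G3 [H1 [H2 [H3 H]]]]]].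
    exists G1, G2, G3. split; [|split; [|split]]; auto.
Qed.
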